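(* Let $n=6k+2$ with $k\geq 2$ an integer, and let $\mathcal{U}_n$ be the latin square defined below. Then $\mathcal{U}_n$ has a transversal, and every suitable diagonal of $\mathcal{U}_n$ contains the $k$ entries $$(1,3,5),\ (3,4,8),\ \text{and}\ (3j+3,\ n-6j,\ n-3j+4)\ \text{for } j=1,\dots,k-2,$$ i.e. the entries $(1,3,5),(3,4,8),(6,n-6,1),(9,n-12,n-2),\ldots,(3k-3,14,3k+12)$ (all coordinates read modulo $n$).
   Context: Rows, columns and symbols are indexed by $\mathbb{Z}_n=\{0,1,\dots,n-1\}$; all arithmetic on symbols is modulo $n$, and congruence conditions on $a,b$ modulo $2$ or $3$ refer to the representatives in $\{0,\dots,n-1\}$. A latin square is viewed as its set of entries $(r,c,s)$ (symbol $s$ in row $r$, column $c$). For $n=6k+2$, $k\ge2$, the latin square $\mathcal{U}_n$ is defined by $\mathcal{U}_n[a,b]=$ $a+b+1$ if $(a,b)\in\{(1,3),(2,5),(3,4)\}$; $a+b-1$ if $(a,b)\in\{(1,4),(2,4),(3,5),(4,3),(4,4)\}$; $a+b+2$ if $(a,b)\in\{(0,4),(2,3)\}$; $a+b+2$ if $b\ne4$, $b\equiv0\pmod2$ and $a=2$; $a+b+3$ if ($b>3$, $b\equiv 0\pmod 3$ and $a=0$) or $(a,b)=(0,1)$; $a+b-3$ if ($b>3$, $b\equiv0\pmod3$ and $a=3$) or $(a,b)=(3,1)$; $a+b-2$ if ($b\neq4$, $b\equiv0\pmod2$ and $a=4$) or $(a,b)=(3,3)$; $a+b+2$ if $5\le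 a\le 3k-2$, $a\equiv2\pmod3$, $b\equiv0\pmod2$ and $b\ne n-2a+4$; $a+b+1$ if $5\le a\le 3k-2$, $a\equiv 2\pmod3$ and $b\in\{n-2a+4,n-2a+5\}$; $a+b+1$ if $5\le a\le 3k-2$, $a\equiv0\pmod 3$ and $b=n-2a+6$; $a+b-1$ if $5\le a\le 3k-2$, $a\equiv 0\pmod3$ and $b=n-2a+7$; $a+b-2$ if $5\le a\le 3k-2$, $a\equiv1\pmod3$ and $b\equiv0\pmod2$; $a+b$ otherwise. A transversal is a set of $n$ entries containing each row, column and symbol exactly once. For an entry $(r,c,s)$, $\Delta(r,c,s)$ is the unique integer with $\Delta(r,c,s)\equiv s-r-c\pmod n$ and $-n/2<\Delta(r,c,s)\le n/2$. A suitable diagonal is a set of $n$ entries, no two sharing a row or a column, whose $\Delta$-values sum to something congruent to $n/2$ modulo $n$. *)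

(* Defs.v *)
From mathcomp Require Import all_boot all_order all_algebra.
From mathcomp Require Import all_fingroup.
Set Implicit Arguments. Unset Strict Implicit. Unset Printing Implicit Defensive.
Import GRing.Theory Num.Theory.

(* The latin square U_n, n = 6k+2, as a function on representatives
   a, b in {0,...,n-1}; the result is the symbol's representative in
   {0,...,n-1}.  "a+b+d" is computed modulo n (negative d via adding n). *)
Definition Usym (k a b : nat) : nat :=
  let n := 6 * k + 2 in
  let p d := (a + b + d) %% n in
  let m d := (a + b + n - d) %% n in
  if (a, b) \in [:: (1,3); (2,5); (3,4)] then p 1
  else if (a, b) \in [:: (1,4); (2,4); (3,5); (4,3); (4,4)] then m 1
  else if (a, b) \in [:: (0,4); (2,3)] then p 2
  else if [&& b != 4, ~~ odd b & a == 2] then p 2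
  else if [&& 3 < b, b %% 3 == 0 & a == 0] || ((a, b) == (0,1)) then p 3
  else if [&& 3 < b, b %% 3 == 0 & a == 3] || ((a, b) == (3,1)) then m 3
  else if [&& b != 4, ~~ odd b & a == 4] || ((a, b) == (3,3)) then m 2
  else if [&& 5 <= a, a <= 3 * k - 2, a %% 3 == 2, ~~ odd b & b != n - 2 * a + 4]
    then p 2
  else if [&& 5 <= a, a <= 3 * k - 2, a %% 3 == 2 & ((b == n - 2 * a + 4) || (b == n - 2 * a + 5))]
    then p 1
  else if [&& 5 <= a, a <= 3 * k - 2, a %% 3 == 0 & b == n - 2 * a + 6] then p 1
  else if [&& 5 <= a, a <= 3 * k - 2, a %% 3 == 0 & b == n - 2 * a + 7] then m 1
  else if [&& 5 <= a, a <= 3 * k - 2, a %% 3 == 1 & ~~ odd b] then m 2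
  else p 0.

Definition Delta (n r c s : nat) : int :=
  let d := (s + 2 * n - r - c) %% n in
  if d <= n./2 then (d%:Z)%R else (d%:Z - n%:Z)%R.

(* A set of n entries with no two sharing a row or a column is exactly
   {(i, sigma i, U[i, sigma i]) | i} for a permutation sigma of the rows. *)
Definition diag_has_entry (k : nat) (s : 'S_(6 * k + 2)) (r c x : nat) : Prop :=
  exists i : 'I_(6 * k + 2),
    [/\ (i : nat) = r %% (6 * k + 2), (s i : nat) = c %% (6 * k + 2)
      & Usym k i (s i) = x %% (6 * k + 2)].

Definition U_transversal (k : nat) (s : 'S_(6 * k + 2)) : Prop :=
  injective (fun i : 'I_(6 * k + 2) => Usym k i (s i)).

Definition U_suitable (k : nat) (s : 'S_(6 * k + 2)) : Prop :=
  ((\sum_(i < 6 * k + 2) Delta (6 * k + 2) i (s i) (Usym k i (s i)))%R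
     = ((3 * k + 1)%:Z) %[mod (6 * k + 2)%:Z])%Z.

(* Main.v *)
Require Import Defs.
From mathcomp Require Import all_boot all_order all_algebra all_fingroup.
From mathcomp Require Import zify.
Set Implicit Arguments. Unset Strict Implicit. Unset Printing Implicit Defensive.
Import GRing.Theory Num.Theory.

Definition off (k a b : nat) : int :=
  let n := 6 * k + 2 in
  if (a, b) \in [:: (1,3); (2,5); (3,4)] then (Posz 1)
  else if (a, b) \in [:: (1,4); (2,4); (3,5); (4,3); (4,4)] then (- (Posz 1))%R
  else if (a, b) \in [:: (0,4); (2,3)] then (Posz 2)
  else if [&& b != 4, ~~ odd b & a == 2] then (Posz 2)
  else if [&& 3 < b, b %% 3 == 0 & a == 0] || ((a, b) == (0,1)) then (Posz 3)
  else if [&& 3 < b, b %% 3 == 0 & a == 3] || ((a, b) == (3,1)) then (- (Posz 3))%R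
  else if [&& b != 4, ~~ odd b & a == 4] || ((a, b) == (3,3)) then (- (Posz 2))%R
  else if [&& 5 <= a, a <= 3 * k - 2, a %% 3 == 2, ~~ odd b & b != n - 2 * a + 4]
    then (Posz 2)
  else if [&& 5 <= a, a <= 3 * k - 2, a %% 3 == 2 & ((b == n - 2 * a + 4) || (b == n - 2 * a + 5))]
    then (Posz 1)
  else if [&& 5 <= a, a <= 3 * k - 2, a %% 3 == 0 & b == n - 2 * a + 6] then (Posz 1)
  else if [&& 5 <= a, a <= 3 * k - 2, a %% 3 == 0 & b == n - 2 * a + 7] then (- (Posz 1))%R
  else if [&& 5 <= a, a <= 3 * k - 2, a %% 3 == 1 & ~~ odd b] then (- (Posz 2))%R
  else (Posz 0).

Lemma half_n k : (6 * k + 2)./2 = 3 * k + 1.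
Proof. by rewrite (_ : 6 * k + 2 = (3 * k + 1).*2) ?doubleK //; rewrite -mul2n; lia. Qed.

Lemma delta_p n a b d : 0 < n -> a < n -> b < n -> d <= n./2 ->
  Delta n a b ((a + b + d) %% n) = (Posz d).
Proof.
move=> n0 an bn dn; rewrite /Delta.
have dlt : d < n by lia.
have -> : (a + b + d) %% n + 2 * n - a - b = (a + b + d) %% n + (2 * n - (a + b)) by lia.
rewrite modnDml (_ : a + b + d + (2 * n - (a + b)) = 2 * n + d); last by lia.
by rewrite modnMDl modn_small // dn.
Qed.

Lemma delta_m n a b d : 0 < n -> a < n -> b < n -> 0 < d -> d < n./2 ->
  Delta n a b ((a + b + n - d) %% n) = (- (Posz d))%R.
Proof.
move=> n0 an bn d0 dn; rewrite /Delta.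
have dlt : d < n by lia.
have -> : (a + b + n - d) %% n + 2 * n - a - b = (a + b + n - d) %% n + (2 * n - (a + b)) by lia.
rewrite modnDml (_ : a + b + n - d + (2 * n - (a + b)) = 2 * n + (n - d)); last by lia.
rewrite modnMDl modn_small; last by lia.
have -> : (n - d <= n./2) = false.
  apply/negbTE; rewrite -ltnNge. lia.
lia.
Qed.
Lemma Delta_U k a b : 2 <= k -> a < 6 * k + 2 -> b < 6 * k + 2 ->
  Delta (6 * k + 2) a b (Usym k a b) = off k a b.
Proof.
move=> k2 an bn; rewrite /Usym /off; cbv beta zeta.
have n0 : 0 < 6 * k + 2 by lia.
have hn := half_n k.
repeat case: ifP => _;
  first [ apply: delta_p => //; lia | apply: delta_m => //; lia ].
Qed.
Definition hi (k a : nat) : int :=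
  if a == 0 then Posz 3 else if a == 1 then Posz 1 else if a == 2 then Posz 2
  else if a == 3 then Posz 1
  else if [&& 5 <= a, a <= 3 * k - 2 & a %% 3 == 2] then Posz 2
  else if [&& 5 <= a, a <= 3 * k - 2 & a %% 3 == 0] then Posz 1
  else Posz 0.

Definition lo (k a : nat) : int :=
  if a == 0 then Posz 0 else if a == 1 then (- Posz 1)%R else if a == 2 then (- Posz 1)%R
  else if a == 3 then (- Posz 3)%R else if a == 4 then (- Posz 2)%R
  else if [&& 5 <= a, a <= 3 * k - 2 & a %% 3 == 0] then (- Posz 1)%R
  else if [&& 5 <= a, a <= 3 * k - 2 & a %% 3 == 1] then (- Posz 2)%R
  else Posz 0.

Ltac norm := rewrite ?in_cons ?in_nil ?xpair_eqE ?orbF.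
Ltac clear_false := repeat match goal with H : _ = false |- _ => clear H end.
Ltac leaf := first [ by [] | (clear_false; lia) | lia ].
Ltac splitleaf := repeat (case: ifP => ?); leaf.

Lemma classify k a : 2 <= k ->
  a = 0 \/ a = 1 \/ a = 2 \/ a = 3 \/ a = 4 \/ (5 <= a <= 3 * k - 2 /\ a %% 3 = 2) \/
   (5 <= a <= 3 * k - 2 /\ a %% 3 = 0) \/ (5 <= a <= 3 * k - 2 /\ a %% 3 = 1) \/ (3 * k - 2 < a /\ 4 < a).
Proof. move=> k2; lia. Qed.

Lemma hi_cls k a : 4 < a ->
  hi k a = if [&& 5 <= a, a <= 3 * k - 2 & a %% 3 == 2] then Posz 2
  else if [&& 5 <= a, a <= 3 * k - 2 & a %% 3 == 0] then Posz 1 else Posz 0.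
Proof. move=> a4; rewrite /hi; do 4 (rewrite ifF; last by lia); done. Qed.

Lemma lo_cls k a : 4 < a ->
  lo k a = if [&& 5 <= a, a <= 3 * k - 2 & a %% 3 == 0] then (- Posz 1)%R
  else if [&& 5 <= a, a <= 3 * k - 2 & a %% 3 == 1] then (- Posz 2)%R else Posz 0.
Proof. move=> a4; rewrite /lo; do 5 (rewrite ifF; last by lia); done. Qed.

Definition offT (k a b : nat) : int :=
  let n := 6 * k + 2 in
  if [&& 5 <= a, a <= 3 * k - 2, a %% 3 == 2, ~~ odd b & b != n - 2 * a + 4]
    then (Posz 2)
  else if [&& 5 <= a, a <= 3 * k - 2, a %% 3 == 2 & ((b == n - 2 * a + 4) || (b == n - 2 * a + 5))]
    then (Posz 1)
  else if [&& 5 <= a, a <= 3 * k - 2, a %% 3 == 0 & b == n - 2 * a + 6] then (Posz 1)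
  else if [&& 5 <= a, a <= 3 * k - 2, a %% 3 == 0 & b == n - 2 * a + 7] then (- (Posz 1))%R
  else if [&& 5 <= a, a <= 3 * k - 2, a %% 3 == 1 & ~~ odd b] then (- (Posz 2))%R
  else (Posz 0).

Lemma off_ge5 k a b : 4 < a -> off k a b = offT k a b.
Proof.
move=> a4; rewrite /off /offT; cbv beta zeta; norm.
do 7 (rewrite ifF; last by lia); done.
Qed.

Ltac tA := rewrite /off /hi /lo /=; norm; splitleaf.
Ltac tB := first [rewrite hi_cls; last lia | rewrite lo_cls; last lia]; rewrite off_ge5; last lia; rewrite /offT; cbv beta zeta; splitleaf.

Lemma off_hi k a b : 2 <= k -> a < 6 * k + 2 -> b < 6 * k + 2 -> (off k a b <= hi k a)%R.
Proof.
move=> k2 an bn.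
Time case: (classify a k2) => [->|[->|[->|[->|[->|[[H1 H2]|[[H1 H2]|[[H1 H2]|[H1 H2]]]]]]]]];
  [ time tA | time tA | time tA | time tA | time tA | time tB | time tB | time tB | time tB ].
Qed.

Lemma off_lo k a b : 2 <= k -> a < 6 * k + 2 -> b < 6 * k + 2 -> (lo k a <= off k a b)%R.
Proof.
move=> k2 an bn.
case: (classify a k2) => [->|[->|[->|[->|[->|[[H1 H2]|[[H1 H2]|[[H1 H2]|[H1 H2]]]]]]]]];
  [ time tA | time tA | time tA | time tA | time tA | time tB | time tB | time tB | time tB ].
Qed.

Lemma hi1 k b : off k 1 b = hi k 1 -> b = 3.
Proof. Time rewrite /off /hi /=; norm; splitleaf. Qed.
Lemma hi3 k b : off k 3 b = hi k 3 -> b = 4.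
Proof. Time rewrite /off /hi /=; norm; splitleaf. Qed.
Lemma lo1 k b : off k 1 b = lo k 1 -> b = 4.
Proof. Time rewrite /off /lo /=; norm; splitleaf. Qed.
Lemma lo2 k b : off k 2 b = lo k 2 -> b = 4.
Proof. Time rewrite /off /lo /=; norm; splitleaf. Qed.
Lemma hij k j b : 1 <= j <= k - 2 -> off k (3 * j + 3) b = hi k (3 * j + 3) -> b = 6 * k + 2 - 6 * j.
Proof.
move=> hj; rewrite off_ge5; last lia; rewrite hi_cls; last lia.
rewrite ifF; last lia.
rewrite ifT; last lia.
rewrite /offT; cbv beta zeta.
rewrite ifF; last lia.
rewrite ifF; last lia.
case: ifP => H; first lia.
do 2 (case: ifP => _; first lia). lia.
Qed.

Lemma mid_hi k m : m <= k - 2 -> (\sum_(5 <= i < 5 + 3 * m) hi k i)%R = Posz (3 * m).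
Proof.
elim: m => [|m IH] hm; first by rewrite big_geq.
rewrite (_ : 5 + 3 * m.+1 = (5 + 3 * m).+2.+1); last lia.
rewrite (big_nat_recr (5 + 3 * m).+2 5) /=; last lia.
rewrite (big_nat_recr (5 + 3 * m).+1 5) /=; last lia.
rewrite (big_nat_recr (5 + 3 * m) 5) /=; last lia.
rewrite IH; last lia.
rewrite (@hi_cls k (5 + 3 * m)); last lia.
rewrite (@hi_cls k (5 + 3 * m).+1); last lia.
rewrite (@hi_cls k (5 + 3 * m).+2); last lia.
repeat (case: ifP => ?; try lia).
Qed.

Lemma mid_lo k m : m <= k - 2 -> (\sum_(5 <= i < 5 + 3 * m) lo k i)%R = (- Posz (3 * m))%R.
Proof.
elim: m => [|m IH] hm; first by rewrite big_geq.
rewrite (_ : 5 + 3 * m.+1 = (5 + 3 * m).+2.+1); last lia.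
rewrite (big_nat_recr (5 + 3 * m).+2 5) /=; last lia.
rewrite (big_nat_recr (5 + 3 * m).+1 5) /=; last lia.
rewrite (big_nat_recr (5 + 3 * m) 5) /=; last lia.
rewrite IH; last lia.
rewrite (@lo_cls k (5 + 3 * m)); last lia.
rewrite (@lo_cls k (5 + 3 * m).+1); last lia.
rewrite (@lo_cls k (5 + 3 * m).+2); last lia.
repeat (case: ifP => ?; try lia).
Qed.


Lemma up_hi k : 2 <= k -> (\sum_(5 + 3 * (k - 2) <= i < 6 * k + 2) hi k i)%R = 0%R.
Proof.
move=> k2; rewrite big_nat_cond big1 // => i /andP [/andP [H1 H2] _].
rewrite hi_cls; last lia.
do 2 (rewrite ifF; last lia). done.
Qed.

Lemma sum_hi k : 2 <= k -> (\sum_(i < 6 * k + 2) hi k i)%R = Posz (3 * k + 1).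
Proof.
move=> k2; rewrite -(big_mkord (fun _ => true)).
rewrite (big_cat_nat _ (n := 5)) //; last lia.
rewrite (big_cat_nat _ (m := 5) (n := 5 + 3 * (k - 2))) /=; try lia.
rewrite mid_hi // up_hi //.
rewrite /index_iota /= !big_cons big_nil.
rewrite /hi /=. lia.
Qed.

Lemma up_lo k : 2 <= k -> (\sum_(5 + 3 * (k - 2) <= i < 6 * k + 2) lo k i)%R = 0%R.
Proof.
move=> k2; rewrite big_nat_cond big1 // => i /andP [/andP [H1 H2] _].
rewrite lo_cls; last lia.
do 2 (rewrite ifF; last lia). done.
Qed.

Lemma sum_lo k : 2 <= k -> (\sum_(i < 6 * k + 2) lo k i)%R = (- Posz (3 * k + 1))%R.
Proof.
move=> k2; rewrite -(big_mkord (fun _ => true)).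
rewrite (big_cat_nat _ (n := 5)) //; last lia.
rewrite (big_cat_nat _ (m := 5) (n := 5 + 3 * (k - 2))) /=; try lia.
rewrite mid_lo // up_lo //.
rewrite /index_iota /= !big_cons big_nil.
rewrite /lo /=. lia.
Qed.

Lemma Usym_at k a b v : 2 <= k -> (forall d, Usym k a b = d -> d = v) -> Usym k a b = v.
Proof. by move=> _ H; apply: H. Qed.

Lemma Usym_13 k : Usym k 1 3 = 5 %% (6 * k + 2).
Proof. by rewrite /Usym. Qed.

Lemma Usym_j k j : 1 <= j <= k - 2 ->
  Usym k (3 * j + 3) (6 * k + 2 - 6 * j) = (6 * k + 2 - 3 * j + 4) %% (6 * k + 2).
Proof.
move=> hj; rewrite /Usym; cbv beta zeta; norm.
do 9 (rewrite ifF; last lia).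
rewrite ifT; last lia.
congr (_ %% _); lia.
Qed.

Lemma suitable_part k (s : 'S_(6 * k + 2)) : 2 <= k -> U_suitable s ->
     [/\ diag_has_entry s 1 3 5,
         diag_has_entry s 3 4 8
       & forall j : nat, 1 <= j <= k - 2 ->
           diag_has_entry s (3 * j + 3) (6 * k + 2 - 6 * j) (6 * k + 2 - 3 * j + 4)].
Proof.
move=> k2 Hs.
have HD : forall i : 'I_(6 * k + 2), Delta (6 * k + 2) i (s i) (Usym k i (s i)) = off k i (s i).
  by move=> i; apply: Delta_U.
move: Hs; rewrite /U_suitable (eq_bigr _ (fun i _ => HD i)) => Hs.
set S := (\sum_(i < 6 * k + 2) off k i (s i))%R in Hs.
have Sle : (S <= Posz (3 * k + 1))%R.
  by rewrite -(sum_hi k2); apply: ler_sum => i _; apply: off_hi.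
have Sge : (- Posz (3 * k + 1) <= S)%R.
  by rewrite -(sum_lo k2); apply: ler_sum => i _; apply: off_lo.
have : S = Posz (3 * k + 1) \/ S = (- Posz (3 * k + 1))%R.
  move/eqP: Hs; rewrite eqz_mod_dvd => /dvdzP [q Hq].
  have N0 : (0 <= Posz (6 * k + 2))%R by [].
  case: (lerP 1 q) => q1.
    by have := ler_wpM2r N0 q1; rewrite mul1r; lia.
  case: (lerP q (-2)) => q2.
    by have := ler_wpM2r N0 q2; lia.
  have [qe|qe] : q = 0%R \/ q = (-1)%R by lia.
    by left; move: Hq; rewrite qe mul0r; lia.
  by right; move: Hq; rewrite qe mulN1r; lia.
case=> HS.
- have Z : forall i : 'I_(6 * k + 2), (hi k i - off k i (s i) = 0)%R.
    move=> i; have := @psumr_eq0P _ _ (fun _ => true) (fun i : 'I_(6 * k + 2) => (hi k i - off k i (s i))%R); apply => //.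
      by move=> i' _; rewrite subr_ge0; apply: off_hi.
    by rewrite sumrB sum_hi // -/S HS subrr.
  have E : forall i : 'I_(6 * k + 2), off k i (s i) = hi k i.
    by move=> i; move: (Z i); lia.
  have l1 : 1 < 6 * k + 2 by lia.
  have l3 : 3 < 6 * k + 2 by lia.
  split.
  + exists (Ordinal l1); have e := hi1 (E (Ordinal l1)); split => /=.
    * by rewrite modn_small.
    * by rewrite e modn_small //; lia.
    * by rewrite e Usym_13.
  + exists (Ordinal l3); have e := hi3 (E (Ordinal l3)); split => /=.
    * by rewrite modn_small.
    * by rewrite e modn_small //; lia.
    * by rewrite e /Usym.
  + move=> j hj.
    have lj : 3 * j + 3 < 6 * k + 2 by lia.
    exists (Ordinal lj); rewrite /= (hij hj (E (Ordinal lj))).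
    rewrite (modn_small lj) (modn_small (_ : 6 * k + 2 - 6 * j < 6 * k + 2)); last lia.
    by split => //; rewrite Usym_j.
- have Z : forall i : 'I_(6 * k + 2), (off k i (s i) - lo k i = 0)%R.
    move=> i; have := @psumr_eq0P _ _ (fun _ => true) (fun i : 'I_(6 * k + 2) => (off k i (s i) - lo k i)%R); apply => //.
      by move=> i' _; rewrite subr_ge0; apply: off_lo.
    by rewrite sumrB sum_lo // -/S HS subrr.
  have E : forall i : 'I_(6 * k + 2), off k i (s i) = lo k i.
    by move=> i; move: (Z i); lia.
  have l1 : 1 < 6 * k + 2 by lia.
  have l2 : 2 < 6 * k + 2 by lia.
  have e1 := lo1 (E (Ordinal l1)).
  have e2 := lo2 (E (Ordinal l2)).
  have : s (Ordinal l1) = s (Ordinal l2) by apply: val_inj; rewrite /= e1 e2.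
  by move/perm_inj.
Qed.
Definition f (k a : nat) : nat :=
  if a == 0 then 1 else if a == 1 then 3 else if a == 2 then 6 * k else if a == 3 then 4
  else if a == 4 then 6 * k + 1
  else if [&& 5 <= a, a <= 3 * k - 2 & (a - 2) %% 3 == 0] then 6 * k - 6 * ((a - 2) %/ 3)
  else if [&& 5 <= a, a <= 3 * k - 2 & (a - 2) %% 3 == 1] then 6 * k + 2 - 6 * ((a - 2) %/ 3)
  else if [&& 5 <= a, a <= 3 * k - 2 & (a - 2) %% 3 == 2] then 6 * k + 1 - 6 * ((a - 2) %/ 3)
  else if a == 3 * k - 1 then 8 else if a == 3 * k then 9 else if a == 3 * k + 1 then 5
  else if a == 3 * k + 2 then 6 else if a == 3 * k + 3 then 2 else if a == 3 * k + 4 then 0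
  else if [&& 3 * k + 5 <= a, a <= 6 * k - 2 & (6 * k + 4 - a) %% 3 == 0] then 6 * ((6 * k + 4 - a) %/ 3) + 3
  else if [&& 3 * k + 5 <= a, a <= 6 * k - 2 & (6 * k + 4 - a) %% 3 == 1] then 6 * ((6 * k + 4 - a) %/ 3) + 5
  else if [&& 3 * k + 5 <= a, a <= 6 * k - 2 & (6 * k + 4 - a) %% 3 == 2] then 6 * ((6 * k + 4 - a) %/ 3) + 4
  else if a == 6 * k + 1 then 7 else if a == 6 * k then 11 else if a == 6 * k - 1 then 10 else 0.

Definition h (k a : nat) : nat :=
  if a == 0 then 4 else if a == 1 then 5 else if a == 2 then 2 else if a == 3 then 8
  else if a == 4 then 3
  else if [&& 5 <= a, a <= 3 * k - 2 & (a - 2) %% 3 == 0] then 6 * k + 4 - 3 * ((a - 2) %/ 3)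
  else if (a == 6) && (3 <= k) then 1 else if (a == 7) && (3 <= k) then 0
  else if [&& 5 <= a, a <= 3 * k - 2 & (a - 2) %% 3 == 1] then 6 * k + 6 - 3 * ((a - 2) %/ 3)
  else if [&& 5 <= a, a <= 3 * k - 2 & (a - 2) %% 3 == 2] then 6 * k + 5 - 3 * ((a - 2) %/ 3)
  else if a == 3 * k - 1 then 3 * k + 7 else if (a == 3 * k) && (k == 2) then 1 else if a == 3 * k then 3 * k + 9 else if a == 3 * k + 1 then 3 * k + 6
  else if (a == 3 * k + 2) && (k == 2) then 0 else if a == 3 * k + 2 then 3 * k + 8 else if a == 3 * k + 3 then 3 * k + 5 else if a == 3 * k + 4 then 3 * k + 4
  else if [&& 3 * k + 5 <= a, a <= 6 * k - 2 & (6 * k + 4 - a) %% 3 == 0] then 3 * ((6 * k + 4 - a) %/ 3) + 5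
  else if [&& 3 * k + 5 <= a, a <= 6 * k - 2 & (6 * k + 4 - a) %% 3 == 1] then 3 * ((6 * k + 4 - a) %/ 3) + 6
  else if [&& 3 * k + 5 <= a, a <= 6 * k - 2 & (6 * k + 4 - a) %% 3 == 2] then 3 * ((6 * k + 4 - a) %/ 3) + 4
  else if a == 6 * k + 1 then 6 else if a == 6 * k then 9 else if a == 6 * k - 1 then 7 else 0.

Ltac evf := rewrite /f; repeat (rewrite ifF; last lia); rewrite ifT; last lia; lia.
Ltac evh := rewrite /h; repeat (rewrite ifF; last lia); rewrite ifT; last lia; lia.

Definition fspec (k a : nat) : Prop :=
  [/\ a = 0, f k a = 1 & h k a = 4] \/
  [/\ a = 1, f k a = 3 & h k a = 5] \/
  [/\ a = 2, f k a = 6 * k & h k a = 2] \/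
  [/\ a = 3, f k a = 4 & h k a = 8] \/
  [/\ a = 4, f k a = 6 * k + 1 & h k a = 3] \/
  (exists i, [/\ 1 <= i <= k - 2, a = 3 * i + 2, f k a = 6 * k - 6 * i & h k a = 6 * k + 4 - 3 * i]) \/
  (exists i, [/\ i = 1 /\ 3 <= k, a = 3 * i + 3, f k a = 6 * k - 4 & h k a = 1]) \/
  (exists i, [/\ 2 <= i <= k - 2, a = 3 * i + 3, f k a = 6 * k + 2 - 6 * i & h k a = 6 * k + 6 - 3 * i]) \/
  (exists i, [/\ i = 1 /\ 3 <= k, a = 3 * i + 4, f k a = 6 * k - 5 & h k a = 0]) \/
  (exists i, [/\ 2 <= i <= k - 2, a = 3 * i + 4, f k a = 6 * k + 1 - 6 * i & h k a = 6 * k + 5 - 3 * i]) \/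
  [/\ a = 3 * k - 1, f k a = 8 & h k a = 3 * k + 7] \/
  [/\ a = 3 * k, k = 2, f k a = 9 & h k a = 1] \/
  [/\ a = 3 * k, 3 <= k, f k a = 9 & h k a = 3 * k + 9] \/
  [/\ a = 3 * k + 1, f k a = 5 & h k a = 3 * k + 6] \/
  [/\ a = 3 * k + 2, k = 2, f k a = 6 & h k a = 0] \/
  [/\ a = 3 * k + 2, 3 <= k, f k a = 6 & h k a = 3 * k + 8] \/
  [/\ a = 3 * k + 3, f k a = 2 & h k a = 3 * k + 5] \/
  [/\ a = 3 * k + 4, f k a = 0 & h k a = 3 * k + 4] \/
  (exists m, [/\ 2 <= m <= k - 1, a = 6 * k + 4 - 3 * m, f k a = 6 * m + 3 & h k a = 3 * m + 5]) \/
  (exists m, [/\ 2 <= m <= k - 1, a = 6 * k + 3 - 3 * m, f k a = 6 * m + 5 & h k a = 3 * m + 6]) \/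
  (exists m, [/\ 2 <= m <= k - 1, a = 6 * k + 2 - 3 * m, f k a = 6 * m + 4 & h k a = 3 * m + 4]) \/
  [/\ a = 6 * k + 1, f k a = 7 & h k a = 6] \/
  [/\ a = 6 * k, f k a = 11 & h k a = 9] \/
  [/\ a = 6 * k - 1, f k a = 10 & h k a = 7].

Lemma f_spec k a : 2 <= k -> a < 6 * k + 2 -> fspec k a.
Proof.
move=> k2 an; rewrite /fspec.
case: (ltnP a 5) => H5.
  have : a = 0 \/ a = 1 \/ a = 2 \/ a = 3 \/ a = 4 by lia.
  by case=> [H|[H|[H|[H|H]]]]; [(left; split; [lia|evf|evh])|(do 1 right; left; split; [lia|evf|evh])|(do 2 right; left; split; [lia|evf|evh])|(do 3 right; left; split; [lia|evf|evh])|(do 4 right; left; split; [lia|evf|evh])].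
case: (leqP a (3 * k - 2)) => HF.
  have : (a - 2) %% 3 = 0 \/ (a - 2) %% 3 = 1 \/ (a - 2) %% 3 = 2 by lia.
  case=> [HR|[HR|HR]].
  - by (do 5 right; left; exists ((a - 2) %/ 3); split; [lia|lia|evf|evh]).
  - by case: (eqVneq a 6) => H6; [(do 6 right; left; exists ((a - 2) %/ 3); split; [lia|lia|evf|evh])|(do 7 right; left; exists ((a - 2) %/ 3); split; [lia|lia|evf|evh])].
  - by case: (eqVneq a 7) => H7; [(do 8 right; left; exists ((a - 2) %/ 3); split; [lia|lia|evf|evh])|(do 9 right; left; exists ((a - 2) %/ 3); split; [lia|lia|evf|evh])].
case: (leqP a (3 * k + 4)) => HQ.
  have : a = 3 * k - 1 \/ a = 3 * k \/ a = 3 * k + 1 \/ a = 3 * k + 2 \/ a = 3 * k + 3 \/ a = 3 * k + 4 by lia.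
  by case=> [H|[H|[H|[H|[H|H]]]]]; [(do 10 right; left; split; [lia|evf|evh])|case: (eqVneq k 2) => Hk; [(do 11 right; left; split; [lia|lia|evf|evh])|(do 12 right; left; split; [lia|lia|evf|evh])]|(do 13 right; left; split; [lia|evf|evh])|case: (eqVneq k 2) => Hk; [(do 14 right; left; split; [lia|lia|evf|evh])|(do 15 right; left; split; [lia|lia|evf|evh])]|(do 16 right; left; split; [lia|evf|evh])|(do 17 right; left; split; [lia|evf|evh])].
case: (leqP a (6 * k - 2)) => HM.
  have : (6 * k + 4 - a) %% 3 = 0 \/ (6 * k + 4 - a) %% 3 = 1 \/ (6 * k + 4 - a) %% 3 = 2 by lia.
  by case=> [HR|[HR|HR]]; [(do 18 right; left; exists ((6 * k + 4 - a) %/ 3); split; [lia|lia|evf|evh])|(do 19 right; left; exists ((6 * k + 4 - a) %/ 3); split; [lia|lia|evf|evh])|(do 20 right; left; exists ((6 * k + 4 - a) %/ 3); split; [lia|lia|evf|evh])].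
have : a = 6 * k + 1 \/ a = 6 * k \/ a = 6 * k - 1 by lia.
by case=> [H|[H|H]]; [(do 21 right; left; split; [lia|evf|evh])|(do 22 right; left; split; [lia|evf|evh])|(do 23 right; split; [lia|evf|evh])].
Qed.

Ltac destr H := match type of H with
 | _ \/ _ => let H1 := fresh "H" in let H2 := fresh "H" in destruct H as [H1|H2]; [destr H1 | destr H2]
 | exists _, _ => let x := fresh "x" in let H1 := fresh "H" in destruct H as [x H1]; destr H1
 | [/\ _, _ & _] => let H1 := fresh "H" in let H2 := fresh "H" in let H3 := fresh "H" in
     destruct H as [H1 H2 H3]; destr H1; destr H2; destr H3
 | [/\ _, _, _ & _] => let H1 := fresh "H" in let H2 := fresh "H" in let H3 := fresh "H" in let H4 := fresh "H" in
     destruct H as [H1 H2 H3 H4]; destr H1; destr H2; destr H3; destr H4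
 | _ /\ _ => let H1 := fresh "H" in let H2 := fresh "H" in destruct H as [H1 H2]; destr H1; destr H2
 | _ => idtac end.

Lemma f_lt k a : 2 <= k -> a < 6 * k + 2 -> f k a < 6 * k + 2.
Proof. move=> k2 an; have Sa := f_spec k2 an; rewrite /fspec in Sa; destr Sa; lia. Qed.

Lemma f_inj k a b : 2 <= k -> a < 6 * k + 2 -> b < 6 * k + 2 -> f k a = f k b -> a = b.
Proof.
move=> k2 an bn E; have Sa := f_spec k2 an; have Sb := f_spec k2 bn.
rewrite /fspec in Sa Sb; destr Sa; destr Sb; lia.
Qed.

Lemma h_inj k a b : 2 <= k -> a < 6 * k + 2 -> b < 6 * k + 2 -> h k a = h k b -> a = b.
Proof.
move=> k2 an bn E; have Sa := f_spec k2 an; have Sb := f_spec k2 bn.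
rewrite /fspec in Sa Sb; destr Sa; destr Sb; lia.
Qed.

Lemma modn_id3 x n v : v < n -> (x = v \/ x = v + n \/ x = v + 2 * n) -> x %% n = v.
Proof.
move=> vn [->|[->|->]]; first by rewrite modn_small.
  by rewrite modnDr modn_small.
by rewrite addnC modnMDl modn_small.
Qed.

Lemma Usym_f k a : 2 <= k -> a < 6 * k + 2 -> Usym k a (f k a) = h k a.
Proof.
move=> k2 an; have Sa := f_spec k2 an; rewrite /fspec in Sa; destr Sa;
  match goal with H : f k a = _ |- _ => rewrite H end;
  match goal with H : h k a = _ |- _ => rewrite H end;
  rewrite /Usym; cbv beta zeta; norm;
  repeat (rewrite ifF; last lia); (try (rewrite ifT; last lia)); apply: modn_id3; lia.
Qed.

Unset Implicit Arguments.

Theorem lemma8 (k : nat) : 2 <= k ->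
  (exists s : 'S_(6 * k + 2), U_transversal s) /\
  (forall s : 'S_(6 * k + 2), U_suitable s ->
     [/\ diag_has_entry s 1 3 5,
         diag_has_entry s 3 4 8
       & forall j : nat, 1 <= j <= k - 2 ->
           diag_has_entry s (3 * j + 3) (6 * k + 2 - 6 * j) (6 * k + 2 - 3 * j + 4)]).
Proof.
move=> k2; split; last by move=> s Hs; apply: suitable_part.
have flt : forall i : 'I_(6 * k + 2), f k i < 6 * k + 2 by move=> i; apply: f_lt.
pose g := fun i : 'I_(6 * k + 2) => Ordinal (flt i).
have ginj : injective g.
  move=> x y /(congr1 val) /= E; apply: val_inj.
  exact: (f_inj k2 (ltn_ord x) (ltn_ord y) E).
exists (perm ginj) => x y /=; rewrite !permE /= !Usym_f // => E; apply: val_inj.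
exact: (h_inj k2 (ltn_ord x) (ltn_ord y) E).
Qed.
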